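(* Let $\tilde{\Phi}:\mathbb{R}_{++}^{n\times m}\to\mathbb{R}$ be smooth and strictly convex, and suppose its gradient map $S:\mathbb{R}_{++}^{n\times m}\to\mathbb{R}^{n\times m}$, $S^{ij}(A)=\partial\tilde{\Phi}/\partial A_{ij}(A)$, is surjective. Let $\Phi$ be the restriction of $\tilde{\Phi}$ to $\mathcal{P}_{nm-1}$. Then for each $p\in\mathcal{P}_{n-1}$, $q\in\mathcal{P}_{m-1}$, the problem of minimizing $\Phi(P)$ over $P\in\Pi(p,q)$ has a unique solution $P^*(p,q)\in\Pi(p,q)$ (in particular the infimum of $\Phi$ over $\Pi(p,q)$ is attained at a matrix with strictly positive entries, and $P^*(p,q)$ is also the unique minimizer over the closure $\overline{\Pi(p,q)}$ of the continuous extension of $\Phi$). Moreover, a maximizer $(\alpha^*,\beta^* )\in\mathbb{R}^n\times\mathbb{R}^m$ of the dual problem $\sup_{\alpha,\beta}\{\langle p,\alpha\rangle+\langle q,\beta\rangle-\tilde{\Phi}^*(\alpha\oplus\beta)\}$ exists, and any such maximizer satisfies \[ S^{ij}(P^*(p,q))=(\alpha^* )^i+(\beta^* )^j,\qquad 1\le i\le n,\ 1\le j\le m. \]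
   Context: $\mathbb{R}_{++}^{n\times m}$ denotes the set of real $n\times m$ matrices with all entries strictly positive. $\mathcal{P}_{n-1}=\{p\in\mathbb{R}^n:\sum_i p_i=1,\ p_i>0\}$, similarly $\mathcal{P}_{m-1}$, and $\mathcal{P}_{nm-1}=\{P\in\mathbb{R}_{++}^{n\times m}:\sum_{i,j}P_{ij}=1\}$. $\Pi(p,q)=\{P\in\mathcal{P}_{nm-1}:\sum_j P_{ij}=p_i\ \forall i,\ \sum_i P_{ij}=q_j\ \forall j\}$, and $\overline{\Pi(p,q)}$ is its closure in $\mathbb{R}^{n\times m}$. The Legendre transform is $\tilde{\Phi}^*(u)=\sup_{A\in\mathbb{R}_{++}^{n\times m}}\{\langle A,u\rangle-\tilde{\Phi}(A)\}$ with $\langle A,u\rangle=\sum_{i,j}A_{ij}u^{ij}$, and $(\alpha\oplus\beta)^{ij}=\alpha^i+\beta^j$. *)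

(* Defs.v *)
From HB Require Import structures.
From mathcomp Require Import all_boot all_order all_algebra.
From mathcomp Require Import all_classical all_reals all_analysis.
Set Implicit Arguments. Unset Strict Implicit. Unset Printing Implicit Defensive.
Import Order.TTheory GRing.Theory Num.Theory.
Import numFieldNormedType.Exports.
Local Open Scope classical_set_scope.
Local Open Scope ring_scope.

Section Defs.
Variables (R : realType) (n m : nat).
Notation M := 'M[R]_(n, m).

Definition pos_mx : set M := [set A | forall i j, 0 < A i j].

Definition simplex_pos (k : nat) : set ('I_k -> R) :=
  [set p | (forall i, 0 < p i) /\ \sum_(i < k) p i = 1].

Definition simplex_mx : set M :=
  [set P | P \in pos_mx /\ \sum_(i < n) \sum_(j < m) P i j = 1].

Definition Pi (p : 'I_n -> R) (q : 'I_m -> R) : set M :=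
  [set P | P \in simplex_mx /\ (forall i, \sum_(j < m) P i j = p i)
                         /\ (forall j, \sum_(i < n) P i j = q j)].

Definition mx_inner (A u : M) : R := \sum_(i < n) \sum_(j < m) A i j * u i j.

Definition unit_dir (ij : 'I_n * 'I_m) : M := delta_mx ij.1 ij.2.

Definition iter_partial (l : seq ('I_n * 'I_m)) (f : M -> R) : M -> R :=
  foldr (fun ij g => fun A => 'D_(unit_dir ij) g A) f l.

Definition smooth_on (D : set M) (f : M -> R) : Prop :=
  forall l : seq ('I_n * 'I_m),
    (forall A, A \in D -> {for A, continuous (iter_partial l f)}) /\
    (forall ij A, A \in D -> derivable (iter_partial l f) A (unit_dir ij)).

Definition strictly_convex_on (D : set M) (f : M -> R) : Prop :=
  forall A B (t : R), A \in D -> B \in D -> A != B -> 0 < t < 1 ->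
    f (t *: A + (1 - t) *: B) < t * f A + (1 - t) * f B.

Definition grad (f : M -> R) (A : M) : M :=
  \matrix_(i, j) 'D_(unit_dir (i, j)) f A.

Definition legendre (f : M -> R) (u : M) : \bar R :=
  ereal_sup [set ((mx_inner A u - f A)%:E) | A in pos_mx].

Definition oplus (a : 'I_n -> R) (b : 'I_m -> R) : M := \matrix_(i, j) (a i + b j).

Definition dual_obj (f : M -> R) (p : 'I_n -> R) (q : 'I_m -> R)
  (a : 'I_n -> R) (b : 'I_m -> R) : \bar R :=
  ((\sum_(i < n) p i * a i + \sum_(j < m) q j * b j)%:E
     - legendre f (oplus a b))%E.

Definition is_dual_max (f : M -> R) p q a b : Prop :=
  forall a' b', (dual_obj f p q a' b' <= dual_obj f p q a b)%E.

Definition unique_minimizer (D : set M) (g : M -> R) (P : M) : Prop :=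
  P \in D /\ (forall Q, Q \in D -> g P <= g Q) /\
  (forall Q, Q \in D -> (forall Q', Q' \in D -> g Q <= g Q') -> Q = P).

End Defs.

(* Main.v *)
Require Import Defs.
From HB Require Import structures.
From mathcomp Require Import all_boot all_order all_algebra.
From mathcomp Require Import all_classical all_reals all_analysis.
From mathcomp Require Import ring lra.
Import Order.TTheory GRing.Theory Num.Theory.
Import numFieldNormedType.Exports.
Local Open Scope classical_set_scope.
Local Open Scope ring_scope.
Set Implicit Arguments.
Unset Strict Implicit.
Section Norm.
Variables (R : realType) (n m : nat).
Implicit Types X Y : 'M[R]_(n, m).

Lemma mx_entry_le X i j : `|X i j| <= `|X|.
Proof.
have -> : `|X| = mx_norm X by []; rewrite mx_normrE.
exact: (le_bigmax _ (fun ij : 'I_n * 'I_m => `|X ij.1 ij.2|) (i, j)).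
Qed.

Lemma mx_norm_le X c : 0 <= c -> (forall i j, `|X i j| <= c) -> `|X| <= c.
Proof.
move=> c0 H; have -> : `|X| = mx_norm X by []; rewrite mx_normrE.
by apply/bigmax_leP; split => // -[i j] _; apply: H.
Qed.

Lemma mx_norm_lt X c : 0 < c -> (forall i j, `|X i j| < c) -> `|X| < c.
Proof.
move=> c0 H; have -> : `|X| = mx_norm X by []; rewrite mx_normrE.
by apply/bigmax_ltP; split => // -[i j] _; apply: H.
Qed.

Lemma ipDl (A B u : 'M[R]_(n, m)) :
  mx_inner (A + B) u = mx_inner A u + mx_inner B u.
Proof.
rewrite /mx_inner -big_split; apply: eq_bigr => i _.
by rewrite -big_split; apply: eq_bigr => j _; rewrite mxE mulrDl.
Qed.

Lemma ipZl (a : R) (A u : 'M[R]_(n, m)) :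
  mx_inner (a *: A) u = a * mx_inner A u.
Proof.
rewrite /mx_inner mulr_sumr; apply: eq_bigr => i _.
by rewrite mulr_sumr; apply: eq_bigr => j _; rewrite mxE mulrA.
Qed.

Lemma ipDr (A u v : 'M[R]_(n, m)) :
  mx_inner A (u + v) = mx_inner A u + mx_inner A v.
Proof.
rewrite /mx_inner -big_split; apply: eq_bigr => i _.
by rewrite -big_split; apply: eq_bigr => j _; rewrite mxE mulrDr.
Qed.

Lemma ipZr (a : R) (A u : 'M[R]_(n, m)) :
  mx_inner A (a *: u) = a * mx_inner A u.
Proof.
rewrite /mx_inner mulr_sumr; apply: eq_bigr => i _.
by rewrite mulr_sumr; apply: eq_bigr => j _; rewrite mxE mulrCA.
Qed.

Lemma ip0l (u : 'M[R]_(n, m)) : mx_inner 0 u = 0.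
Proof. by have := ipZl 0 0 u; rewrite scale0r mul0r. Qed.

Lemma ipNl (A u : 'M[R]_(n, m)) : mx_inner (- A) u = - mx_inner A u.
Proof. by rewrite -scaleN1r ipZl mulN1r. Qed.

Lemma ipBl (A B u : 'M[R]_(n, m)) :
  mx_inner (A - B) u = mx_inner A u - mx_inner B u.
Proof. by rewrite ipDl ipNl. Qed.

Lemma ipNr (A u : 'M[R]_(n, m)) : mx_inner A (- u) = - mx_inner A u.
Proof. by rewrite -scaleN1r ipZr mulN1r. Qed.

Lemma ipBr (A u v : 'M[R]_(n, m)) :
  mx_inner A (u - v) = mx_inner A u - mx_inner A v.
Proof. by rewrite ipDr ipNr. Qed.

Lemma ip_delta i j (u : 'M[R]_(n, m)) : mx_inner (delta_mx i j) u = u i j.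
Proof.
rewrite /mx_inner (bigD1 i) //= (bigD1 j) //= !mxE !eqxx mul1r.
rewrite big1 ?addr0 => [|k kj]; last by rewrite mxE eqxx (negbTE kj) mul0r.
rewrite big1 ?addr0 // => k ki; apply: big1 => l _.
by rewrite mxE (negbTE ki) mul0r.
Qed.

Lemma ip_bound (A u : 'M[R]_(n, m)) :
  `|mx_inner A u| <= (n * m)%:R * (`|A| * `|u|).
Proof.
rewrite /mx_inner; apply: (le_trans (ler_norm_sum _ _ _)).
have -> : (n * m)%:R * (`|A| * `|u|) =
   \sum_(i < n) \sum_(j < m) (`|A| * `|u|).
  by rewrite sumr_const card_ord sumr_const card_ord -mulrnA mulr_natl mulnC.
apply: ler_sum => i _; apply: (le_trans (ler_norm_sum _ _ _)).
apply: ler_sum => j _; rewrite normrM.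
by apply: ler_pM => //; apply: mx_entry_le.
Qed.

End Norm.
Section Compact.
Variables (R : realType) (n m : nat).

Lemma vec_mx_norm (v : 'rV[R]_(n * m)) : `|vec_mx v : 'M[R]_(n, m)| <= `|v|.
Proof.
apply: mx_norm_le => // i j; rewrite mxE; exact: mx_entry_le.
Qed.

Lemma mxvec_norm (X : 'M[R]_(n, m)) : `|mxvec X| <= `|X|.
Proof.
apply: mx_norm_le => // i k; rewrite ord1.
case/mxvec_indexP: k => a b; rewrite mxvecE; exact: mx_entry_le.
Qed.

Lemma vec_mx_cont : continuous (@vec_mx R n m).
Proof.
move=> v; apply/(@cvgrPdist_lt _ _ _ _ (@nbhs_filter _ v)) => e e0.

apply/(@nbhs_normP _ 'rV[R]_(n * m)); exists e => //= w.
rewrite /ball_ /= => Hw; rewrite -linearB /=.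
exact: le_lt_trans (vec_mx_norm _) Hw.
Qed.

Lemma mx_compact (S : set 'M[R]_(n, m)) (c : R) :
  (forall X, S X -> `|X| <= c) -> closed S -> compact S.
Proof.
move=> Sb Sc.
have -> : S = (@vec_mx R n m) @` ((@vec_mx R n m) @^-1` S).
  apply/seteqP; split => [X SX|_ [v Sv <-] //].
  by exists (mxvec X); rewrite /= mxvecK.
apply: continuous_compact.
  by apply: continuous_subspaceT => x; apply: vec_mx_cont.
apply: bounded_closed_compact.
  apply: filterS (nbhs_pinfty_ge (num_real c)) => M cM v Sv.
  rewrite /= -[v]vec_mxK; apply: le_trans (mxvec_norm _) _.
  exact: le_trans (Sb _ Sv) cM.
by apply: preimage_closed => // x _; apply: vec_mx_cont.
Qed.
End Compact.

Section Cont.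
Variables (R : realType) (n m : nat).

Lemma ip_cont (u : 'M[R]_(n, m)) : continuous (fun X : 'M[R]_(n, m) => mx_inner X u).
Proof.
move=> X; apply/(@cvgrPdist_lt _ _ _ _ (@nbhs_filter _ X)) => e e0.
apply/(@nbhs_normP _ 'M[R]_(n, m)).
exists (e / ((n * m)%:R * `|u| + 1)); first by rewrite /= divr_gt0 // ltr_wpDl // mulr_ge0.
move=> Y; rewrite /ball_ /= => HY.
rewrite -ipBl; apply: le_lt_trans (ip_bound _ _) _.
have h1 : 0 < (n * m)%:R * `|u| + 1 by rewrite ltr_wpDl // mulr_ge0.
rewrite ltr_pdivlMr // in HY.
apply: le_lt_trans HY; rewrite mulrCA mulrDr mulr1 lerDl; by [].
Qed.

Lemma norm_sub_cont (A : 'M[R]_(n, m)) : continuous (fun X : 'M[R]_(n, m) => `|X - A|).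
Proof.
move=> X; apply/(@cvgrPdist_lt _ _ _ _ (@nbhs_filter _ X)) => e e0.
apply/(@nbhs_normP _ 'M[R]_(n, m)); exists e => // Y; rewrite /ball_ /= => HY.
apply: le_lt_trans HY; apply: le_trans (ler_dist_dist _ _) _.
by rewrite opprB addrA subrK.
Qed.
End Cont.
Unset Implicit Arguments.
Section IPcvg.
Variables (R : realType) (n m : nat).
Lemma ip_cvg (T : Type) (F : set_system T) (FF : Filter F)
   (f g : T -> 'M[R]_(n, m)) a b :
  f @ F --> a -> g @ F --> b ->
  (fun x => mx_inner (f x) (g x)) @ F --> mx_inner a b.
Proof.
move=> Hf Hg; rewrite /mx_inner.
apply: cvg_big => // [|i _]; first exact: add_continuous.
apply: cvg_big => // [|j _]; first exact: add_continuous.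
apply: cvgM.
  exact: (cvg_comp _ _ Hf (@coord_continuous _ _ _ i j a)).
exact: (cvg_comp _ _ Hg (@coord_continuous _ _ _ i j b)).
Qed.
End IPcvg.
Set Implicit Arguments.
Section Helpers.
Variables (R : realType) (n m : nat).
Local Notation MT := 'M[R]_(n, m).

Lemma cont_epsd (f : MT -> R) (X : MT) : {for X, continuous f} ->
  forall e, 0 < e -> exists2 d, 0 < d & forall Y, `|X - Y| < d -> `|f X - f Y| < e.
Proof.
move=> Hf e e0.
have := (@cvgrPdist_lt _ _ _ _ (@nbhs_filter _ X) f (f X)).1 Hf e e0.
move/(@nbhs_normP _ MT) => [d d0 Hd]; exists d => // Y HY; exact: Hd.
Qed.

Lemma within_epsd (A : set MT) (f : MT -> R) (X : MT) :
  {within A, continuous f} -> A X ->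
  forall e, 0 < e -> exists2 d, 0 < d &
    forall Y, `|X - Y| < d -> A Y -> `|f X - f Y| < e.
Proof.
move=> /subspace_continuousP Hf AX e e0.
have := (@cvgrPdist_lt _ _ _ _ _ f (f X)).1 (Hf X AX) e e0.
move=> /(_ (within_filter _ _)) H.
have {}H : \forall t \near X, A t -> `|f X - f t| < e by exact: H.
move/(@nbhs_normP _ MT) : H => [d d0 Hd]; exists d => // Y HY AY; exact: Hd.
Qed.

Lemma closure_near (S : set MT) (Q : MT) d : closure S Q -> 0 < d ->
  exists X, S X /\ `|Q - X| < d.
Proof.
move=> HQ d0.
have : nbhs Q [set X | `|Q - X| < d].
  by apply/(@nbhs_normP _ MT); exists d.
by move/HQ => [X [SX HX]]; exists X.
Qed.

Lemma closure_ip (S : set MT) (W : MT) c (Q : MT) : closure S Q ->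
  (forall X, S X -> c <= mx_inner X W) -> c <= mx_inner Q W.
Proof.
move=> HQ HS; rewrite leNgt; apply/negP => Hlt.
set g := c - mx_inner Q W.
have g0 : 0 < g by rewrite subr_gt0.
set N := (n * m)%:R : R.
have h1 : 0 < N * `|W| + 1 by rewrite ltr_wpDl // mulr_ge0.
have [X [SX HX]] := closure_near HQ (divr_gt0 g0 h1).
have := HS _ SX.
have B := ip_bound (Q - X) W; rewrite ipBl -/N in B.
move/ler_normlP : B => [B1 B2].
rewrite ltr_pdivlMr // in HX.
have B3 : N * (`|Q - X| * `|W|) <= `|Q - X| * (N * `|W| + 1).
  by rewrite mulrCA mulrDr mulr1 lerDl.
move: B1 B2 B3 HX; rewrite /g.
set a := mx_inner Q W; set b := mx_inner X W; set z := N * (`|Q - X| * `|W|).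
set y := `|Q - X| * (N * `|W| + 1).
move=> B1 B2 B3 HX H; lra.
Qed.

Lemma ip_delta_r i j (u : MT) : mx_inner u (delta_mx i j) = u i j.
Proof.
rewrite /mx_inner (bigD1 i) //= (bigD1 j) //= !mxE !eqxx mulr1.
rewrite big1 ?addr0 => [|k kj]; last by rewrite mxE eqxx (negbTE kj) mulr0.
rewrite big1 ?addr0 // => k ki; apply: big1 => l _.
by rewrite mxE (negbTE ki) mulr0.
Qed.

Lemma ip_oplus (P : MT) a b : mx_inner P (oplus a b) =
  \sum_(i < n) (\sum_(j < m) P i j) * a i + \sum_(j < m) (\sum_(i < n) P i j) * b j.
Proof.
rewrite /mx_inner.
have E i : \sum_(j < m) P i j * oplus a b i j =
    (\sum_(j < m) P i j) * a i + \sum_(j < m) P i j * b j.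
  by rewrite mulr_suml -big_split; apply: eq_bigr => j _; rewrite /oplus mxE mulrDr.
rewrite (eq_bigr _ (fun i _ => E i)) big_split /=; congr (_ + _).
by rewrite exchange_big; apply: eq_bigr => j _; rewrite mulr_suml.
Qed.

End Helpers.
Unset Implicit Arguments.

Lemma sum1_pos (R : realType) k (f : 'I_k -> R) : \sum_(i < k) f i = 1 -> (0 < k)%N.
Proof. by case: k f => [f|//]; rewrite big_ord0 => /eqP; rewrite eq_sym oner_eq0. Qed.

Lemma delta_norm (R : realType) n m (i : 'I_n) (j : 'I_m) :
  `|delta_mx i j : 'M[R]_(n, m)| <= 1.
Proof.
apply: mx_norm_le => // k l; rewrite mxE.
by case: (_ && _); rewrite ?normr1 ?normr0.
Qed.
Section Main.
Variables (R : realType) (n m : nat) (Phi : 'M[R]_(n, m) -> R).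
Local Notation MT := 'M[R]_(n, m).
Hypothesis Hs : smooth_on (@pos_mx R n m) Phi.
Hypothesis Hc : strictly_convex_on (@pos_mx R n m) Phi.
Hypothesis Hsurj :
  forall U : MT, exists2 A, A \in @pos_mx R n m & grad Phi A = U.

Local Notation pos := (@pos_mx R n m).

Lemma posP (A : MT) : A \in pos <-> forall i j, 0 < A i j.
Proof. by rewrite inE. Qed.

Lemma pos_conv (A B : MT) t : A \in pos -> B \in pos -> 0 <= t <= 1 ->
  t *: A + (1 - t) *: B \in pos.
Proof.
move=> /posP HA /posP HB /andP[t0 t1]; apply/posP => i j; rewrite !mxE.
have := HA i j; have := HB i j; nra.
Qed.

Lemma conv_le (A B : MT) t : A \in pos -> B \in pos -> 0 <= t <= 1 ->
  Phi (t *: A + (1 - t) *: B) <= t * Phi A + (1 - t) * Phi B.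
Proof.
move=> HA HB /andP[t0 t1].
have [->|tn0] := eqVneq t 0; first by rewrite scale0r mul0r !add0r subr0 scale1r mul1r.
have [->|tn1] := eqVneq t 1; first by rewrite subrr scale0r mul0r !addr0 scale1r mul1r.
have [->|AB] := eqVneq A B.
  by rewrite -scalerDl -mulrDl subrKC scale1r mul1r.
apply: ltW; apply: Hc => //.
by rewrite lt0r tn0 t0 /= lt_neqAle tn1 t1.
Qed.

Lemma pos_open (A : MT) : A \in pos ->
  exists2 r : R, 0 < r & forall X, `|X - A| < r -> X \in pos.
Proof.
move=> /posP HA.
pose r := \big[Order.min/1]_(k : 'I_n * 'I_m) A k.1 k.2.
have r0 : 0 < r by apply: lt_bigmin => // -[i j] _; apply: HA.
exists r => // X HX; apply/posP => i j.
have rle : r <= A i j.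
  exact: (bigmin_le _ (i, j) (fun k : 'I_n * 'I_m => A k.1 k.2)).
have : `|(X - A) i j| < r by apply: le_lt_trans HX; apply: mx_entry_le.
rewrite !mxE => /ltr_normlP [H _]; lra.
Qed.

Lemma pos_seg (A d : MT) : A \in pos ->
  exists2 e : R, 0 < e & forall t, `|t| < e -> A + t *: d \in pos.
Proof.
move=> /pos_open [r r0 Hr]; exists (r / (`|d| + 1)).
  by rewrite divr_gt0 // ltr_wpDl.
move=> t Ht; apply: Hr; rewrite addrC addKr normrZ.
have d1 : 0 < `|d| + 1 by rewrite ltr_wpDl.
apply: (@le_lt_trans _ _ (`|t| * (`|d| + 1))).
  by rewrite ler_wpM2l // lerDl.
by rewrite -ltr_pdivlMr.
Qed.

Lemma pos_ofcvg : True. Proof. by []. Qed.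

Section GI.
Variable A : MT.
Hypothesis HA : A \in pos.
Let u := grad Phi A.
Let q (d : MT) (t : R) := (Phi (A + t *: d) - Phi A) / t.
Let Up (d : MT) := forall e : R, 0 < e -> exists2 de : R, 0 < de &
  forall t, 0 < t < de -> q d t <= mx_inner d u + e.

Lemma Up0 : Up 0.
Proof.
move=> e e0; exists 1 => // t _.
by rewrite /q scaler0 addr0 subrr mul0r ip0l add0r ltW.
Qed.

Lemma UpD d1 d2 : Up d1 -> Up d2 -> Up (d1 + d2).
Proof.
move=> H1 H2 e e0.
have e2 : 0 < e / 2 by rewrite divr_gt0.
have [a1 a10 Ha1] := H1 _ e2; have [a2 a20 Ha2] := H2 _ e2.
have [b1 b10 Hb1] := pos_seg A d1 HA; have [b2 b20 Hb2] := pos_seg A d2 HA.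
pose de := Num.min (Num.min a1 a2) (Num.min b1 b2) / 2.
have de0 : 0 < de by rewrite divr_gt0 // !lt_min a10 a20 b10 b20.
exists de => // t /andP[t0 tde].
have tle : 2 * t < Num.min (Num.min a1 a2) (Num.min b1 b2).
  by rewrite mulrC -ltr_pdivlMr.
move: tle; rewrite !lt_min => /andP[/andP[ta1 ta2] /andP[tb1 tb2]].
have t20 : 0 < 2 * t by rewrite mulr_gt0.
have P1 := Hb1 (2 * t) ltac:(by rewrite gtr0_norm).
have P2 := Hb2 (2 * t) ltac:(by rewrite gtr0_norm).
have Q1 := Ha1 (2 * t) ltac:(by rewrite t20 ta1).
have Q2 := Ha2 (2 * t) ltac:(by rewrite t20 ta2).
have Hcv := @conv_le _ _ (1/2) P1 P2 ltac:(by rewrite divr_ge0 //= ler_pdivrMr // mul1r ler1n).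
have E : (1 / 2) *: (A + (2 * t) *: d1) + (1 - 1 / 2) *: (A + (2 * t) *: d2)
   = A + t *: (d1 + d2).
  rewrite !scalerDr !scalerA -addrA [X in _ + X]addrCA addrA -scalerDl.
  have -> : 1 / 2 + (1 - 1 / 2) = 1 :> R by ring.
  rewrite scale1r -scalerDr; congr (_ + _).
  have -> : 1 / 2 * (2 * t) = t :> R by field.
  have -> : (1 - 1 / 2) * (2 * t) = t :> R by field.
  by rewrite scalerDr.
rewrite E in Hcv; move: Q1 Q2; rewrite /q ipDl.
rewrite ler_pdivrMr // => Q1; rewrite ler_pdivrMr // => Q2.
rewrite ler_pdivrMr //.
have -> : (mx_inner d1 u + mx_inner d2 u + e) * t =
  ((mx_inner d1 u + e / 2) * (2 * t) + (mx_inner d2 u + e / 2) * (2 * t)) / 2 by field.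
move: Hcv Q1 Q2.
set x := Phi (A + t *: (d1 + d2)); set x1 := Phi (A + (2 * t) *: d1).
set x2 := Phi (A + (2 * t) *: d2); set y := Phi A.
set z1 := (mx_inner d1 u + e / 2) * (2 * t).
set z2 := (mx_inner d2 u + e / 2) * (2 * t).
move=> Hcv Q1 Q2; lra.
Qed.

Lemma UpE (c : R) (i : 'I_n) (j : 'I_m) : Up (c *: delta_mx i j).
Proof.
have [->|c0] := eqVneq c 0; first by rewrite scale0r; exact: Up0.
have ca : 0 < `|c| by rewrite normr_gt0.
move=> eps eps0.
have := (Hs [::]).2 (i, j) A HA.
rewrite /iter_partial /= => Hd.
have Hcv : (fun h : R => h^-1 *: ((Phi \o shift A) (h *: unit_dir R (i, j)) - Phi A)) @ 0^' --> 'D_(unit_dir R (i, j)) Phi A := Hd.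
move/cvgrPdist_lt : Hcv => /(_ (eps / `|c|)) /=.
rewrite divr_gt0 // => /(_ isT).
rewrite /dnbhs /within /=.
move/nbhs_normP => [e e0 He].
exists (e / `|c|); first by rewrite divr_gt0.
move=> t /andP[t0 te].
have hne : t * c != 0 by rewrite mulf_neq0 // gt_eqF.
have hb : ball_ Num.Def.normr 0 e (t * c).
  by rewrite /ball_ /= sub0r normrN normrM gtr0_norm // -ltr_pdivlMr.
have := He _ hb hne.
rewrite ipZl ip_delta /q.
have -> : u i j = 'D_(unit_dir R (i, j)) Phi A by rewrite /u /grad mxE.
have -> : A + t *: (c *: delta_mx i j) = (t * c) *: unit_dir R (i, j) + A.
  by rewrite addrC scalerA.
set D := 'D_(unit_dir R (i, j)) Phi A.
set z := Phi ((t * c) *: unit_dir R (i, j) + A) - Phi A.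
have -> : z / t = c * ((t * c)^-1 *: z).
  by rewrite /GRing.scale /= invfM mulrA mulrCA mulfV // mulr1 mulrC.
move=> H.
have : `|c * D - c * ((t * c)^-1 *: z)| < eps.
  by rewrite -mulrBr normrM mulrC -ltr_pdivlMr.
move/ltr_normlP => [H1 H2]; lra.
Qed.

Lemma Up_all d : Up d.
Proof.
rewrite (matrix_sum_delta d).
apply: (big_ind Up Up0 UpD) => i _.
apply: (big_ind Up Up0 UpD) => j _.
exact: UpE.
Qed.

Lemma GI (B : MT) : B \in pos -> Phi A + mx_inner (B - A) u <= Phi B.
Proof.
move=> HB.
rewrite -subr_ge0 -[X in _ <= X]subr0.
apply/ler_addgt0Pr => eps eps0.
have [de de0 Hde] := Up_all (- (B - A)) eps eps0.
have [b b0 Hb] := pos_seg A (- (B - A)) HA.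
pose t := Num.min (Num.min de b) 1 / 2.
have t0 : 0 < t by rewrite divr_gt0 // !lt_min de0 b0 ltr01.
have tm : t < Num.min (Num.min de b) 1.
  by rewrite /t ltr_pdivrMr // ltr_pMr // ?ltr1n // !lt_min de0 b0 ltr01.
move: tm; rewrite !lt_min => /andP[/andP[tde tb] t1].
have Q := Hde t ltac:(by rewrite t0 tde).
have Pm := Hb t ltac:(by rewrite gtr0_norm).
have Pp : A + t *: (B - A) = t *: B + (1 - t) *: A.
  by apply/matrixP => k l; rewrite !mxE; ring.
have Cv1 := @conv_le B A t HB HA ltac:(by rewrite ltW //= ltW).
rewrite -Pp in Cv1.
have HP : A + t *: (B - A) \in pos by rewrite Pp pos_conv // ltW //= ltW.
have Cv2 := @conv_le _ _ (1/2) HP Pm ltac:(by rewrite divr_ge0 //= ler_pdivrMr // mul1r ler1n).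
have E : 1 / 2 *: (A + t *: (B - A)) + (1 - 1 / 2) *: (A + t *: - (B - A)) = A.
  by apply/matrixP => k l; rewrite !mxE; field.
rewrite E in Cv2.
move: Q; rewrite /q ipNl ler_pdivrMr // => Q.
move: Cv1 Cv2 Q.
set x1 := Phi (A + t *: (B - A)); set x2 := Phi (A + t *: - (B - A)).
set y := Phi A; set yb := Phi B; set I := mx_inner (B - A) u.
move=> Cv1 + Q.
have -> : 1 - 1 / 2 = 1 / 2 :> R by field.
move=> Cv2.
have H : 0 <= t * (yb - (y + I) - 0 + eps) by nra.
by rewrite pmulr_rge0 in H.
Qed.
End GI.
Arguments GI {A} HA {B} HB.

Lemma GI_strict (A B : MT) : A \in pos -> B \in pos -> A != B ->
  Phi A - mx_inner A (grad Phi A) < Phi B - mx_inner B (grad Phi A).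
Proof.
move=> HA HB AB.
set M := (1 / 2) *: A + (1 - 1 / 2) *: B.
have HM : M \in pos by rewrite pos_conv // divr_ge0 //= ler_pdivrMr // mul1r ler1n.
have G := GI HA HM.
have S := Hc A B (1 / 2) HA HB AB ltac:(by rewrite divr_gt0 //= ltr_pdivrMr // mul1r ltr1n).
move: G S; rewrite -/M.
have -> : 1 - 1 / 2 = 1 / 2 :> R by field.
set x := Phi M; set a := Phi A; set b := Phi B.
set ia := mx_inner A (grad Phi A); set ib := mx_inner B (grad Phi A).
have -> : mx_inner (M - A) (grad Phi A) = 1 / 2 * (ib - ia).
  have -> : M - A = (1 / 2) *: (B - A).
    by apply/matrixP => k l; rewrite /M !mxE; field.
  by rewrite ipZl ipBl.
move=> G S; lra.
Qed.



Arguments GI_strict {A B} HA HB AB.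
Lemma grad_char (A u : MT) : A \in pos ->
  (forall B, B \in pos -> Phi A - mx_inner A u <= Phi B - mx_inner B u) ->
  grad Phi A = u.
Proof.
move=> HA H; have [A' HA' gA'] := Hsurj u.
have [<-//|AA] := eqVneq A' A.
have := GI_strict HA' HA AA; rewrite gA' => S.
have := H _ HA'; move: S.
set a := Phi A - mx_inner A u; set b := Phi A' - mx_inner A' u.
move=> S T; by have := lt_le_trans S T; rewrite ltxx.
Qed.

Definition Aof (u : MT) : MT := projT1 (cid2 (Hsurj u)).

Lemma Aof_pos u : Aof u \in pos.
Proof. by rewrite /Aof; case: (cid2 (Hsurj u)). Qed.

Lemma Aof_grad u : grad Phi (Aof u) = u.
Proof. by rewrite /Aof; case: (cid2 (Hsurj u)). Qed.

Lemma Aof_min u B : B \in pos ->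
  Phi (Aof u) - mx_inner (Aof u) u <= Phi B - mx_inner B u.
Proof.
move=> HB; have := GI (Aof_pos u) HB; rewrite Aof_grad ipBl.
set a := Phi (Aof u); set b := Phi B; set x := mx_inner B u.
set y := mx_inner (Aof u) u; move=> H; lra.
Qed.

Arguments Aof_min {u B} HB.
Lemma Aof_strict u B : B \in pos -> B != Aof u ->
  Phi (Aof u) - mx_inner (Aof u) u < Phi B - mx_inner B u.
Proof.
move=> HB BA; have := GI_strict (Aof_pos u) HB; rewrite Aof_grad eq_sym.
by apply.
Qed.

Arguments Aof_strict {u B} HB BA.
Lemma Aof_uniq u A : A \in pos -> grad Phi A = u -> A = Aof u.
Proof.
move=> HA gA; apply/eqP; apply/negPn/negP => AA.
have := Aof_strict HA AA; have := GI_strict HA (Aof_pos u) AA.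
rewrite gA; set a := Phi (Aof u) - _; set b := Phi A - _.
move=> H1 H2; by have := lt_trans H1 H2; rewrite ltxx.
Qed.

Lemma Phi_cont (X : MT) : X \in pos -> {for X, continuous Phi}.
Proof. by move=> HX; have := (Hs [::]).1 X HX. Qed.

Definition gap (u0 B : MT) :=
  (Phi B - mx_inner B u0) - (Phi (Aof u0) - mx_inner (Aof u0) u0).

Lemma growth (u0 : MT) (eps : R) : 0 < eps -> exists2 k : R, 0 < k &
  forall B, B \in pos -> eps <= `|B - Aof u0| -> k * `|B - Aof u0| <= gap u0 B.
Proof.
move=> eps0; set A0 := Aof u0.
have [r r0 Hr] := pos_open _ (Aof_pos u0).
pose e' := Num.min eps (r / 2).
have e'0 : 0 < e' by rewrite lt_min eps0 divr_gt0.
have e'eps : e' <= eps by rewrite ge_min lexx.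
have e'r : e' < r.
  by rewrite /e' gt_min; apply/orP; right; rewrite ltr_pdivrMr // ltr_pMr // ltr1n.
pose S := [set X : MT | `|X - A0| = e'].
have Spos X : S X -> X \in pos by move=> SX; apply: Hr; rewrite SX.
have SA X : S X -> X != A0.
  move=> SX; apply/eqP => XA; move: SX; rewrite /S /= XA subrr normr0 => /eqP.
  by rewrite eq_sym gt_eqF.
have resc B : B \in pos -> eps <= `|B - A0| ->
   let l := e' / `|B - A0| in
   [/\ 0 < l, l <= 1, S (l *: B + (1 - l) *: A0) &
       gap u0 (l *: B + (1 - l) *: A0) <= l * gap u0 B].
  move=> HB Heps l.
  have nB : 0 < `|B - A0| by apply: lt_le_trans Heps.
  have l0 : 0 < l by rewrite divr_gt0.
  have l1 : l <= 1 by rewrite ler_pdivrMr // mul1r (le_trans e'eps).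
  split => //.
    rewrite /S /=.
    have -> : l *: B + (1 - l) *: A0 - A0 = l *: (B - A0).
      by apply/matrixP => i j; rewrite !mxE; ring.
    by rewrite normrZ gtr0_norm // divfK // gt_eqF.
  rewrite /gap -/A0.
  have Cv := @conv_le B A0 l HB (Aof_pos u0) ltac:(by rewrite ltW //= l1).
  rewrite ipDl !ipZl.
  move: Cv; set x := Phi (l *: B + (1 - l) *: A0).
  set b := Phi B; set a := Phi A0; set ib := mx_inner B u0; set ia := mx_inner A0 u0.
  move=> Cv; nra.
have [SN|S0] := pselect (S !=set0); last first.
  exists 1 => // B HB Heps; exfalso.
  have [_ _ HS _] := resc B HB Heps.
  by apply: S0; exists (e' / `|B - A0| *: B + (1 - e' / `|B - A0|) *: A0).
have Scomp : compact S.
  apply: (@mx_compact _ _ _ S (`|A0| + e')).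
    move=> X SX; rewrite -SX {1}(_ : X = A0 + (X - A0)); last by rewrite addrC subrK.
    exact: ler_normD.
  have -> : S = (fun X => `|X - A0|) @^-1` [set x | x = e'] by [].
  apply: preimage_closed; last exact: closed_eq.
  by move=> X _; apply: norm_sub_cont.
have gcont : {within S, continuous (gap u0)}.
  apply: continuous_in_subspaceT => X /set_mem SX.
  change {for X, continuous ((Phi - (fun B => mx_inner B u0)) -
     cst (Phi (Aof u0) - mx_inner (Aof u0) u0))}.
  apply: continuousB; last exact: cst_continuous.
  apply: continuousB; [exact: Phi_cont (Spos _ SX)|exact: ip_cont].
have [c Sc cmin] := compact_EVT_min SN Scomp gcont.
have Sc' : S c by move: Sc; rewrite inE.
have gc0 : 0 < gap u0 c.
  by rewrite /gap subr_gt0; apply: Aof_strict; [apply: Spos | apply: SA].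
exists (gap u0 c / e'); first by rewrite divr_gt0.
move=> B HB Heps.
have [l0 l1 HS Hg] := resc B HB Heps.
have := cmin _ (mem_set HS).
have nB : 0 < `|B - A0| by apply: lt_le_trans Heps.
move=> H; have := le_trans H Hg.
set G := gap u0 c; set gB := gap u0 B; set N := `|B - A0|.
move=> H2.
have H3 : G * N <= e' * gB by rewrite -ler_pdivlMr // mulrAC.
by rewrite mulrAC ler_pdivrMr // [gB * _]mulrC.
Qed.

Lemma Aof_cont : continuous Aof.
Proof.
move=> u0; apply/(@cvgrPdist_lt _ _ _ _ (@nbhs_filter _ u0)) => e e0.
apply/(@nbhs_normP _ MT).
have [k k0 Hk] := growth u0 e e0.
set N := (n * m)%:R : R.
have N1 : 0 < N + 1 by rewrite ltr_wpDl.
exists (k / (N + 1)); first by rewrite /= divr_gt0.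
move=> u; rewrite /ball_ /= => Hu.
rewrite ltNge; apply/negP => Hd; rewrite distrC in Hd.
set d := `|Aof u - Aof u0| in Hd.
have H1 := Hk _ (Aof_pos u) Hd.
have H2 := @Aof_min u _ (Aof_pos u0).
have H3 : gap u0 (Aof u) <= mx_inner (Aof u - Aof u0) (u - u0).
  move: H2; rewrite /gap ipBl !ipBr.
  set a := Phi (Aof u); set b := Phi (Aof u0).
  set x1 := mx_inner (Aof u) u; set x2 := mx_inner (Aof u) u0.
  set y1 := mx_inner (Aof u0) u; set y2 := mx_inner (Aof u0) u0.
  move=> H; lra.
have H4 := ip_bound (Aof u - Aof u0) (u - u0).
rewrite -/d -/N distrC in H4.
have H5 := le_trans H1 (le_trans H3 (le_trans (ler_norm _) H4)).
have d0 : 0 < d by apply: lt_le_trans Hd.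
rewrite ltr_pdivlMr // distrC in Hu.
move: H5 Hu; set w := `|u - u0|.
have N0 : 0 <= N by [].
move=> H5 Hu.
have H6 : N * (d * w) * (N + 1) < N * d * k + d * k.
  have : N * (d * w) * (N + 1) = (N * d) * (w * (N + 1)) by ring.
  move=> ->.
  have Nd0 : 0 <= N * d by rewrite mulr_ge0 // ltW.
  apply: (@le_lt_trans _ _ (N * d * k)); first by rewrite ler_wpM2l // ltW.
  by rewrite ltrDl mulr_gt0.
have H5' : k * d <= N * (d * w) by move: H5; rewrite -/d (distrC u0 u).
have H7 : k * d * (N + 1) <= N * (d * w) * (N + 1) by rewrite ler_wpM2r // ltW.
have E : k * d * (N + 1) = N * d * k + d * k by ring.
move: H6 H7 E; set P := N * (d * w) * (N + 1); set Q := k * d * (N + 1).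
set Z := N * d * k + d * k; move=> H6 H7 E; lra.
Qed.

Section Dual.
Variables (p : 'I_n -> R) (q : 'I_m -> R).
Hypothesis Hp : p \in @simplex_pos R n.
Hypothesis Hq : q \in @simplex_pos R m.

Lemma p_pos i : 0 < p i. Proof. by move: Hp; rewrite inE => -[]. Qed.
Lemma q_pos j : 0 < q j. Proof. by move: Hq; rewrite inE => -[]. Qed.
Lemma p_sum : \sum_(i < n) p i = 1. Proof. by move: Hp; rewrite inE => -[]. Qed.
Lemma q_sum : \sum_(j < m) q j = 1. Proof. by move: Hq; rewrite inE => -[]. Qed.

Let i0 : 'I_n := Ordinal (@sum1_pos _ _ _ p_sum).
Let j0 : 'I_m := Ordinal (@sum1_pos _ _ _ q_sum).

Definition P0 : MT := \matrix_(i, j) (p i * q j).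

Lemma P0_pos : P0 \in pos.
Proof. by apply/posP => i j; rewrite mxE mulr_gt0 ?p_pos ?q_pos. Qed.

Lemma P0_row i : \sum_(j < m) P0 i j = p i.
Proof.
under eq_bigr do rewrite mxE.
by rewrite -mulr_sumr q_sum mulr1.
Qed.

Lemma P0_col j : \sum_(i < n) P0 i j = q j.
Proof.
under eq_bigr do rewrite mxE.
by rewrite -mulr_suml p_sum mul1r.
Qed.

Definition W (i : 'I_n) (j : 'I_m) : MT :=
  delta_mx i j + delta_mx i0 j0 - delta_mx i j0 - delta_mx i0 j.

Lemma ip_W u i j : mx_inner u (W i j) = u i j + u i0 j0 - u i j0 - u i0 j.
Proof. by rewrite /W !ipBr !ipDr !ip_delta_r. Qed.

Definition L (u : MT) := forall i j, mx_inner u (W i j) = 0.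

Lemma L_oplus a b : L (oplus a b).
Proof. move=> i j; rewrite ip_W /oplus !mxE; ring. Qed.

Lemma L_lin u w t : L u -> L w -> L (u + t *: w).
Proof. by move=> Hu Hw i j; rewrite ipDl ipZl Hu Hw mulr0 addr0. Qed.

Lemma L_oplusE u : L u ->
  u = oplus (fun i => u i j0) (fun j => u i0 j - u i0 j0).
Proof.
move=> Hu; apply/matrixP => i j; rewrite /oplus mxE.
have := Hu i j; rewrite ip_W => H.
apply/eqP; rewrite -subr_eq0; apply/eqP; rewrite -H; ring.
Qed.

Definition Phistar (u : MT) := mx_inner (Aof u) u - Phi (Aof u).

Lemma Phistar_ge u B : B \in pos -> mx_inner B u - Phi B <= Phistar u.
Proof.
move=> HB; have := @Aof_min u _ HB; rewrite /Phistar.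
set a := Phi (Aof u); set b := Phi B; set x := mx_inner B u.
set y := mx_inner (Aof u) u; move=> H; lra.
Qed.

Definition hd (u : MT) := mx_inner P0 u - Phistar u.

Lemma hd_le u B : B \in pos -> hd u <= mx_inner (P0 - B) u + Phi B.
Proof.
move=> HB; have := Phistar_ge u B HB; rewrite /hd ipBl.
set a := Phistar u; set b := Phi B; set x := mx_inner B u.
set y := mx_inner P0 u; move=> H; lra.
Qed.


Lemma hd_coerc : exists2 eps : R, 0 < eps & exists Cb : R,
  forall u, hd u <= Cb - eps * `|u|.
Proof.
have [r r0 Hr] := pos_open _ P0_pos.
pose e := r / 2.
have e0 : 0 < e by rewrite divr_gt0.
have er : e < r by rewrite /e ltr_pdivrMr // ltr_pMr // ltr1n.
have HB s i j : `|s| <= 1 -> P0 + (s * e) *: delta_mx i j \in pos.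
  move=> s1; apply: Hr; rewrite addrC addKr normrZ.
  apply: le_lt_trans er; rewrite normrM (gtr0_norm e0).
  have := delta_norm R n m i j; have := normr_ge0 (delta_mx i j : MT).
  have := normr_ge0 s; move: s1.
  set x := `|s|; set y := `|delta_mx i j : MT|; move=> *.
  have xy : x * y <= 1 by nra.
  by rewrite mulrAC -[leRHS]mul1r ler_wpM2r // ltW.
pose C (k : 'I_n * 'I_m) := Num.max (Phi (P0 + (1 * e) *: delta_mx k.1 k.2))
                                    (Phi (P0 + (-1 * e) *: delta_mx k.1 k.2)).
pose Cb := \big[Num.max/0]_(k : 'I_n * 'I_m) C k.
have CbC k : C k <= Cb by exact: (le_bigmax _ (fun k => C k) k).
have Hij u i j : hd u <= Cb - e * `|u i j|.
  have [uge|ult] := leP 0 (u i j).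
    have H := hd_le u _ (HB 1 i j ltac:(by rewrite normr1)).
    move: H; rewrite opprD addrA subrr add0r ipNl ipZl ip_delta ger0_norm //.
    have := CbC (i, j); rewrite /C /= ge_max => /andP[H1 H3] H2.
    move: H1 H3 H2.
    set a := Phi (P0 + (1 * e) *: delta_mx i j).
    set b := Phi (P0 + (-1 * e) *: delta_mx i j).
    rewrite ?mul1r ?mulN1r ?mulNr ?opprK ?mulrN ?opprK => *; lra.
  have H := hd_le u _ (HB (-1) i j ltac:(by rewrite normrN normr1)).
  move: H; rewrite opprD addrA subrr add0r ipNl ipZl ip_delta ltr0_norm //.
    have := CbC (i, j); rewrite /C /= ge_max => /andP[H1 H3] H2.
    move: H1 H3 H2.
    set a := Phi (P0 + (1 * e) *: delta_mx i j).
    set b := Phi (P0 + (-1 * e) *: delta_mx i j).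
    rewrite ?mul1r ?mulN1r ?mulNr ?opprK ?mulrN ?opprK => *; lra.
exists e => //; exists Cb => u.
have [u0|un0] := eqVneq (mx_norm u) 0.
  have -> : `|u| = 0 by [].
  have := Hij u i0 j0; have := normr_ge0 (u i0 j0).
  set x := `|u i0 j0|; move=> *; nra.
have [k Hk] := mx_norm_neq0 un0.
by have -> : `|u| = `|u k.1 k.2| by [].
Qed.


Lemma L0 : L 0.
Proof. by move=> i j; rewrite ip0l. Qed.

Lemma hd_cont : continuous hd.
Proof.
move=> u.
change {for u, continuous ((fun v => mx_inner P0 v) -
   ((fun v => mx_inner (Aof v) v) - (Phi \o Aof)))}.
apply: continuousB.
  exact: (@ip_cvg _ _ _ _ _ (nbhs_filter u) _ _ _ _ (cvg_cst P0) cvg_id).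
apply: continuousB.
  exact: (@ip_cvg _ _ _ _ _ (nbhs_filter u) _ _ _ _ (Aof_cont u) cvg_id).
apply: continuous_comp; first exact: Aof_cont.
exact: Phi_cont (Aof_pos u).
Qed.

Lemma hd_max : exists2 us, L us & forall u, L u -> hd u <= hd us.
Proof.
have [e e0 [Cb HCb]] := hd_coerc.
pose r' := Num.max 0 ((Cb - hd 0) / e).
pose K := [set u : MT | L u /\ `|u| <= r'].
have K0 : K 0 by split; [exact: L0 | rewrite normr0 le_max lexx].
have Kc : compact K.
  apply: (@mx_compact _ _ _ K r'); first by move=> X [].
  have -> : K = (\bigcap_(k in [set: 'I_n * 'I_m])
        ((fun u => mx_inner u (W k.1 k.2)) @^-1` [set x | x = 0]))
      `&` ((fun u => `|u - 0|) @^-1` [set x | x <= r']).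
    apply/seteqP; split => u /=.
      by move=> [Lu Nu]; split; [move=> k _; exact: Lu | rewrite subr0].
    by move=> [Lu Nu]; split; [move=> i j; exact: (Lu (i, j)) | rewrite -(subr0 u)].
  apply: closedI.
    apply: closed_bigI => k _; apply: preimage_closed; last exact: closed_eq.
    by move=> x _; apply: ip_cont.
  apply: preimage_closed; last exact: closed_le.
  by move=> x _; apply: norm_sub_cont.
have [c Kc' cmax] := compact_EVT_max (ex_intro _ 0 K0) Kc
  (continuous_subspaceT hd_cont).
have [Lc _] : K c by move: Kc'; rewrite inE.
exists c => // u Lu.
have [ur|ur] := leP `|u| r'.
  by apply: cmax; rewrite inE.
have h0c : hd 0 <= hd c by apply: cmax; rewrite inE.
apply: le_trans h0c.
have H1 := HCb u.
have H2 : (Cb - hd 0) / e <= r' by rewrite le_max lexx orbT.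
rewrite ler_pdivrMr // in H2.
have H3 : e * r' < e * `|u| by rewrite ltr_pM2l.
move: H1 H2 H3; set a := e * r'; set b := e * `|u|.
rewrite [r' * e]mulrC -/a => *; lra.
Qed.


Lemma fo (us : MT) : L us -> (forall u, L u -> hd u <= hd us) ->
  forall w, L w -> mx_inner (Aof us) w = mx_inner P0 w.
Proof.
move=> Lus Hmax w Lw.
pose g (t : R) := mx_inner (Aof (us + t *: w)) w.
have key t : t * (mx_inner P0 w - g t) <= 0.
  have H1 := Hmax _ (L_lin us w t Lus Lw).
  have H2 := Phistar_ge us _ (Aof_pos (us + t *: w)).
  move: H1 H2; rewrite /hd /Phistar /g ipDr ipZr !ipDr !ipZr.
  set a := mx_inner P0 us; set b := mx_inner P0 w.
  set x := mx_inner (Aof (us + t *: w)) us; set y := mx_inner (Aof (us + t *: w)) w.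
  set z := Phi (Aof (us + t *: w)); set c := mx_inner (Aof us) us - Phi (Aof us).
  move=> *; nra.
have g0 : g 0 = mx_inner (Aof us) w by rewrite /g scale0r addr0.
have Hlin : (fun t : R => us + t *: w) @ (0 : R) --> us + 0 *: w.
  apply: cvgD; [exact: cvg_cst | apply: cvgZ; [exact: cvg_id | exact: cvg_cst]].
have HA : (fun t : R => Aof (us + t *: w)) @ (0 : R) --> Aof us.
  by have := cvg_comp _ _ Hlin (Aof_cont (us + 0 *: w)); rewrite scale0r addr0.
have gc : g @ (0 : R) --> g 0.
  rewrite g0; exact: (@ip_cvg _ _ _ _ _ (nbhs_filter (0 : R)) _ _ _ _ HA (cvg_cst w)).
rewrite -g0; apply/eqP; rewrite eq_sym -subr_eq0; apply/eqP.
set c := mx_inner P0 w - g 0.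
apply/eqP/negPn/negP => cn0.
have ca : 0 < `|c| by rewrite normr_gt0.
have := (@cvgrPdist_lt _ _ _ _ (nbhs_filter (0 : R)) g (g 0)).1 gc _ ca.
move/(@nbhs_normP _ R^o) => [d d0 Hd].
have [cpos|cneg] := ltP 0 c.
  have t0 : 0 < d / 2 by rewrite divr_gt0.
  have := Hd (d / 2); rewrite /ball_ /= sub0r normrN gtr0_norm // ltr_pdivrMr //.
  rewrite ltr_pMr // ltr1n => /(_ isT).
  rewrite (gtr0_norm cpos) => /ltr_normlP [H1 H2].
  have := key (d / 2); move: H1 H2; rewrite /c.
  set a := mx_inner P0 w; set b := g 0; set y := g (d / 2).
  move=> H1 H2 H3.
  have : 0 < d / 2 * (a - y) by rewrite mulr_gt0 // subr_gt0; lra.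
  by rewrite ltNge H3.
have cneg' : c < 0 by rewrite lt_neqAle cn0 cneg.
have t0 : - (d / 2) < 0 by rewrite oppr_lt0 divr_gt0.
have := Hd (- (d / 2)); rewrite /ball_ /= sub0r opprK gtr0_norm ?divr_gt0 //.
rewrite ltr_pdivrMr // ltr_pMr // ltr1n => /(_ isT).
rewrite (ltr0_norm cneg') => /ltr_normlP [H1 H2].
have := key (- (d / 2)); move: H1 H2; rewrite /c.
set a := mx_inner P0 w; set b := g 0; set y := g (- (d / 2)).
move=> H1 H2 H3.
have : 0 < - (d / 2) * (a - y).
  have -> : - (d / 2) * (a - y) = d / 2 * (y - a) by ring.
  rewrite mulr_gt0 // ?divr_gt0 // subr_gt0; lra.
by rewrite ltNge H3.
Qed.


Definition e_row (i : 'I_n) : MT := oplus (fun k => (k == i)%:R) (fun _ => 0).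
Definition e_col (j : 'I_m) : MT := oplus (fun _ => 0) (fun k => (k == j)%:R).

Lemma ip_row X i : mx_inner X (e_row i) = \sum_(j < m) X i j.
Proof.
rewrite ip_oplus.
have -> : \sum_(j < m) (\sum_(k < n) X k j) * 0 = 0.
  by apply: big1 => k _; rewrite mulr0.
rewrite addr0 (bigD1 i) //= eqxx mulr1.
rewrite [X in _ + X]big1 ?addr0 // => k ki.
by rewrite (negbTE ki) mulr0.
Qed.

Lemma ip_col X j : mx_inner X (e_col j) = \sum_(i < n) X i j.
Proof.
rewrite ip_oplus.
have -> : \sum_(i < n) (\sum_(k < m) X i k) * 0 = 0.
  by apply: big1 => k _; rewrite mulr0.
rewrite add0r (bigD1 j) //= eqxx mulr1.
rewrite [X in _ + X]big1 ?addr0 // => k kj.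
by rewrite (negbTE kj) mulr0.
Qed.

Lemma dual_sol : exists us, [/\ L us, (forall u, L u -> hd u <= hd us),
  (forall i, \sum_(j < m) Aof us i j = p i) &
  (forall j, \sum_(i < n) Aof us i j = q j)].
Proof.
have [us Lus Hmax] := hd_max.
exists us; split => //.
  move=> i; have := fo us Lus Hmax _ (L_oplus _ _ : L (e_row i)).
  by rewrite !ip_row P0_row.
move=> j; have := fo us Lus Hmax _ (L_oplus _ _ : L (e_col j)).
by rewrite !ip_col P0_col.
Qed.

End Dual.

Lemma PiP (p : 'I_n -> R) (q : 'I_m -> R) (Q : MT) : Q \in Pi p q <->
  [/\ Q \in pos, \sum_(i < n) \sum_(j < m) Q i j = 1,
      (forall i, \sum_(j < m) Q i j = p i) & (forall j, \sum_(i < n) Q i j = q j)].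
Proof.
split.
  by move=> /set_mem [/set_mem [HQ S] [Hr Hc']]; split.
by move=> [HQ S Hr Hc']; apply/mem_set; split; [apply/mem_set; split | split].
Qed.

Lemma legendreE u : legendre Phi u = (Phistar u)%:E.
Proof.
apply/eqP; rewrite eq_le; apply/andP; split.
  apply/ereal_supP => _ [A HA <-]; rewrite lee_fin.
  by apply: Phistar_ge; rewrite inE.
apply: ereal_sup_ubound; exists (Aof u) => //.
by have := Aof_pos u; rewrite inE.
Qed.

Lemma ip_marg (P Q : MT) a b :
  (forall i, \sum_(j < m) P i j = \sum_(j < m) Q i j) ->
  (forall j, \sum_(i < n) P i j = \sum_(i < n) Q i j) ->
  mx_inner P (oplus a b) = mx_inner Q (oplus a b).
Proof.
move=> Hr Hc'; rewrite !ip_oplus; congr (_ + _); apply: eq_bigr => k _.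
  by rewrite Hr.
by rewrite Hc'.
Qed.

Lemma main_res (p : 'I_n -> R) (q : 'I_m -> R) :
    p \in @simplex_pos R n -> q \in @simplex_pos R m ->
    exists Pstar : 'M[R]_(n, m),
      [/\ unique_minimizer (Pi p q) Phi Pstar,
          (forall Psi : 'M[R]_(n, m) -> R,
             {within closure (Pi p q), continuous Psi} ->
             (forall P, P \in Pi p q -> Psi P = Phi P) ->
             unique_minimizer (closure (Pi p q)) Psi Pstar),
          (exists a b, is_dual_max Phi p q a b) &
          (forall a b, is_dual_max Phi p q a b ->
             forall i j, grad Phi Pstar i j = a i + b j)].
Proof.
move=> Hp Hq.
have [us [Lus Hmax Hrow Hcol]] := dual_sol p q Hp Hq.
have [a0 [b0 uab]] : exists a0 b0, us = oplus a0 b0.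
  by eexists; eexists; exact: (L_oplusE p q Hp Hq us Lus).
set Ps := Aof us.
have PsPi : Ps \in Pi p q.
  apply/PiP; split => //; first exact: Aof_pos.
  by under eq_bigr do rewrite Hrow; exact: p_sum p Hp.
have P0Pi : P0 p q \in Pi p q.
  apply/PiP; split; first exact: P0_pos.
  - by under eq_bigr do rewrite (P0_row p q Hq); exact: p_sum p Hp.
  - by move=> i; exact: P0_row.
  - by move=> j; exact: P0_col.
have ipeq Q a b : Q \in Pi p q -> mx_inner Q (oplus a b) = mx_inner Ps (oplus a b).
  move=> /PiP [_ _ Hr Hc']; apply: ip_marg => k.
    by rewrite Hr Hrow.
  by rewrite Hc' Hcol.
have Pmin Q : Q \in Pi p q -> Phi Ps <= Phi Q.
  move=> HQ; have /PiP [HQp _ _ _] := HQ.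
  have := @Aof_min us Q HQp; rewrite -/Ps uab (ipeq Q _ _ HQ).
  set x := mx_inner Ps _; move=> H; lra.
have Pstrict Q : Q \in Pi p q -> Q != Ps -> Phi Ps < Phi Q.
  move=> HQ QP; have /PiP [HQp _ _ _] := HQ.
  have := @Aof_strict us Q HQp QP; rewrite -/Ps uab (ipeq Q _ _ HQ).
  set x := mx_inner Ps _; move=> H; lra.
have Puniq Q : Q \in Pi p q -> Phi Q <= Phi Ps -> Q = Ps.
  move=> HQ HQP; apply/eqP/negPn/negP => QP.
  by have := lt_le_trans (Pstrict Q HQ QP) HQP; rewrite ltxx.
have dualE a b : dual_obj Phi p q a b = (hd p q (oplus a b))%:E.
  rewrite /dual_obj legendreE /hd -EFinB; congr (_%:E); congr (_ - _).
  rewrite ip_oplus; congr (_ + _); apply: eq_bigr => k _.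
    by rewrite (P0_row p q Hq).
  by rewrite (P0_col p q Hp).
have hdus : hd p q us = Phi Ps.
  rewrite /hd /Phistar -/Ps uab (ipeq _ _ _ P0Pi); ring.
exists Ps; split.
- split => //; split; first exact: Pmin.
  by move=> Q HQ Hm; apply: Puniq => //; apply: Hm.
- move=> Psi Hpsi Heq.
  have PiS : Pi p q Ps by rewrite -inE.
  have PsCl : closure (Pi p q) Ps by apply: subset_closure.
  have lowb Q : closure (Pi p q) Q -> Phi Ps <= Psi Q.
    move=> HQ; rewrite leNgt; apply/negP => Hlt.
    have g0 : 0 < Phi Ps - Psi Q by rewrite subr_gt0.
    have [d d0 Hd] := within_epsd Hpsi HQ g0.
    have [X [PiX HX]] := closure_near HQ d0.
    have := Hd X HX (subset_closure PiX).
    have XPi : X \in Pi p q by rewrite inE.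
    rewrite (Heq X XPi) => /ltr_normlP [H1 H2].
    have := Pmin X XPi; move: H1 H2 Hlt.
    set a := Phi Ps; set b := Psi Q; set c := Phi X; move=> H1 H2 H3 H4.
    clear -H1 H2 H3 H4; lra.
  split; first by rewrite inE.
  split; first by move=> Q; rewrite inE (Heq Ps PsPi) => HQ; apply: lowb.
  move=> Q /[!inE] HQ Hm.
  have HQP : Psi Q <= Phi Ps by rewrite -(Heq Ps PsPi); apply: Hm; rewrite inE.
  have Qnn i j : 0 <= Q i j.
    rewrite -ip_delta_r; apply: (closure_ip HQ) => X PiX; rewrite ip_delta_r.
    have /PiP [/posP HX _ _ _] : X \in Pi p q by rewrite inE.
    exact: ltW.
  have Qrow i : \sum_(j < m) Q i j = p i.
    have HX X : Pi p q X -> \sum_(j < m) X i j = p i.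
      by move=> PiX; have /PiP [_ _ Hr _] : X \in Pi p q by rewrite inE.
    apply/eqP; rewrite eq_le; apply/andP; split.
      rewrite -lerN2 -ip_row -ipNr; apply: (closure_ip HQ) => X PiX.
      by rewrite ipNr ip_row HX.
    by rewrite -ip_row; apply: (closure_ip HQ) => X PiX; rewrite ip_row HX.
  have Qcol j : \sum_(i < n) Q i j = q j.
    have HX X : Pi p q X -> \sum_(i < n) X i j = q j.
      by move=> PiX; have /PiP [_ _ _ Hc'] : X \in Pi p q by rewrite inE.
    apply/eqP; rewrite eq_le; apply/andP; split.
      rewrite -lerN2 -ip_col -ipNr; apply: (closure_ip HQ) => X PiX.
      by rewrite ipNr ip_col HX.
    by rewrite -ip_col; apply: (closure_ip HQ) => X PiX; rewrite ip_col HX.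
  set M := (1 / 2) *: Q + (1 - 1 / 2) *: Ps.
  have HPs : Ps \in pos := Aof_pos us.
  have Mpos : M \in pos.
    apply/posP => i j; rewrite !mxE; have := Qnn i j.
    have /posP := HPs => /(_ i j); set x := Ps i j; set y := Q i j.
    move=> *; lra.
  have Mrow i : \sum_(j < m) M i j = p i.
    rewrite /M; under eq_bigr do rewrite !mxE.
    by rewrite big_split /= -!mulr_sumr Qrow Hrow; field.
  have Mcol j : \sum_(i < n) M i j = q j.
    rewrite /M; under eq_bigr do rewrite !mxE.
    by rewrite big_split /= -!mulr_sumr Qcol Hcol; field.
  have MPi : M \in Pi p q.
    apply/PiP; split => //.
    by under eq_bigr do rewrite Mrow; exact: p_sum p Hp.
  have MPs : Phi M <= Phi Ps.
    rewrite leNgt; apply/negP => Hlt.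
    set gam := Phi M - (Psi Q + Phi Ps) / 2.
    have gam0 : 0 < gam by rewrite /gam subr_gt0; lra.
    have gam2 : 0 < gam / 2 by rewrite divr_gt0.
    have [d1 d10 Hd1] := cont_epsd (Phi_cont M Mpos) gam2.
    have [d2 d20 Hd2] := within_epsd Hpsi HQ gam0.
    have dd : 0 < Num.min d1 d2 by rewrite lt_min d10 d20.
    have [X [PiX HX]] := closure_near HQ dd.
    move: HX; rewrite lt_min => /andP[HX1 HX2].
    have XPi : X \in Pi p q by rewrite inE.
    have /PiP [HXp _ _ _] := XPi.
    have Cv := @conv_le X Ps (1 / 2) HXp HPs ltac:(by rewrite divr_ge0 //= ler_pdivrMr // mul1r ler1n).
    have H2 := Hd2 X HX2 (subset_closure PiX).
    rewrite (Heq X XPi) in H2.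
    have HMX : `|M - ((1 / 2) *: X + (1 - 1 / 2) *: Ps)| < d1.
      have -> : M - ((1 / 2) *: X + (1 - 1 / 2) *: Ps) = (1 / 2) *: (Q - X).
        by apply/matrixP => i j; rewrite !mxE; field.
      rewrite normrZ; apply: le_lt_trans HX1.
      rewrite -[leRHS]mul1r ler_wpM2r // ger0_norm // ?divr_ge0 //.
      by rewrite ler_pdivrMr // mul1r ler1n.
    have H1 := Hd1 _ HMX.
    move: Cv H1 H2; rewrite /gam.
    set z := Phi ((1 / 2) *: X + (1 - 1 / 2) *: Ps).
    set a := Phi M; set b := Psi Q; set c := Phi Ps; set x := Phi X.
    have -> : 1 - 1 / 2 = 1 / 2 :> R by field.
    move=> Cv /ltr_normlP [H1 H1'] /ltr_normlP [H2 H2'].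
    clear -Cv H1 H1' H2 H2'; lra.
  have MeqPs := Puniq M MPi MPs.
  apply/matrixP => i j.
  have := congr1 (fun X : MT => X i j) MeqPs; rewrite /M !mxE /=.
  set x := Q i j; set y := Ps i j; move=> H; clear -H; lra.
- exists a0, b0 => a b.
  rewrite !dualE lee_fin -uab; apply: Hmax; exact: (L_oplus p q Hp Hq).
- move=> a b Hab i j.
  have H := Hab a0 b0; rewrite !dualE lee_fin -uab hdus in H.
  set v := oplus a b in H.
  have Hv : Phi Ps - mx_inner Ps v <= Phi (Aof v) - mx_inner (Aof v) v.
    move: H; rewrite /hd /Phistar /v (ipeq _ _ _ P0Pi) -/v.
    set x := Phi (Aof v); set y := mx_inner (Aof v) v.
    set z := mx_inner Ps v; set c := Phi Ps; move=> H; lra.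
  have PsA : Ps = Aof v.
    apply/eqP/negPn/negP => Pn.
    have := @Aof_strict v Ps (Aof_pos us) Pn.
    by rewrite ltNge Hv.
  by rewrite PsA Aof_grad /v mxE.
Qed.
End Main.

Theorem theorem1 (R : realType) (n m : nat) (Phi : 'M[R]_(n, m) -> R) :
  smooth_on (@pos_mx R n m) Phi ->
  strictly_convex_on (@pos_mx R n m) Phi ->
  (forall U : 'M[R]_(n, m), exists2 A, A \in @pos_mx R n m & grad Phi A = U) ->
  forall (p : 'I_n -> R) (q : 'I_m -> R),
    p \in @simplex_pos R n -> q \in @simplex_pos R m ->
    exists Pstar : 'M[R]_(n, m),
      [/\ unique_minimizer (Pi p q) Phi Pstar,
          (forall Psi : 'M[R]_(n, m) -> R,
             {within closure (Pi p q), continuous Psi} ->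
             (forall P, P \in Pi p q -> Psi P = Phi P) ->
             unique_minimizer (closure (Pi p q)) Psi Pstar),
          (exists a b, is_dual_max Phi p q a b) &
          (forall a b, is_dual_max Phi p q a b ->
             forall i j, grad Phi Pstar i j = a i + b j)].
Proof.
move=> Hs Hc Hsurj p q Hp Hq.
exact: (@main_res R n m Phi Hs Hc Hsurj p q Hp Hq).
Qed.
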